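(* Let $p$ be an odd prime. For every integer $0<s<p-1$, the polynomial $b_{1,s}(\alpha)\in\mathbb F_p[\alpha]$ satisfies \[ b_{1,s}(\alpha)\cdot b_{1,s}(-\alpha)=1-\alpha^{p-1}. \] In particular, $b_{1,s}(\alpha)$ has degree $(p-1)/2$ and factorizes into a product of distinct linear factors in $\mathbb F_p[\alpha]$.
   Context: $\mathbb F_p$ is the field of $p$ elements, $\alpha$ an indeterminate, $\binom{x}{m}=x(x-1)\cdots(x-m+1)/m!$. For integers $0<r,s<p$ (interpreted as elements of $\mathbb F_p$), $b_{r,s}(\alpha)=\sum_{k=0}^{p-1}(-r/s)^k\binom{r\alpha-1}{p-1-k}\binom{s\alpha-1}{k}\in\mathbb F_p[\alpha]$. *)

(* Defs.v *)
From HB Require Import structures.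
From mathcomp Require Import all_boot all_order all_algebra.
Set Implicit Arguments. Unset Strict Implicit. Unset Printing Implicit Defensive.
Import GRing.Theory.
Local Open Scope ring_scope.

Definition pbinom (F : fieldType) (x : {poly F}) (m : nat) : {poly F} :=
  (m`!%:R)^-1 *: \prod_(i < m) (x - (i%:R)%:P).

Definition b_poly (F : fieldType) (p : nat) (r s : F) : {poly F} :=
  \sum_(k < p) ((- r / s) ^+ k) *:
     (pbinom (r *: 'X - 1) (p.-1 - k) * pbinom (s *: 'X - 1) k).

(* Main.v *)
Require Import Defs.
From HB Require Import structures.
From mathcomp Require Import all_boot all_order all_algebra.
From mathcomp Require Import all_field.
From mathcomp Require Import ring zify.
Import GRing.Theory.
Local Open Scope ring_scope.

Lemma fact_Fp_neq0 p (hp : prime p) j : (j < p)%N -> (j`!)%:R != 0 :> 'F_p.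
Proof.
move=> hj; rewrite -(dvdn_pcharf (pchar_Fp hp)).
elim: j hj => [|j IH] hj; first by rewrite fact0 dvdn1; apply/eqP=> e; move: hp; rewrite e.
rewrite factS Euclid_dvdM // negb_or IH ?(ltnW hj) // andbT.
by apply/negP=> /dvdn_leq => /(_ isT); rewrite leqNgt hj.
Qed.

Lemma prod_ffact (R : pzRingType) n j :
  \prod_(i < j) (n%:R - i%:R) = (n ^_ j)%:R :> R.
Proof.
elim: j => [|j IH]; first by rewrite big_ord0 ffactn0.
rewrite big_ord_recr /= IH ffactnSr natrM.
case: (ssrnat.leqP j n) => hjn; first by rewrite natrB.
by rewrite ffact_small // mulr0n !mul0r.
Qed.

Lemma pbinom_eval p (hp : prime p) (q : {poly 'F_p}) a n j :
  (j < p)%N -> q.[a] = n%:R -> (pbinom q j).[a] = ('C(n, j))%:R.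
Proof.
move=> hj hq; rewrite /pbinom hornerZ horner_prod.
under eq_bigr => i _ do rewrite hornerD hornerN hornerC hq.
rewrite prod_ffact -bin_ffact natrM mulrC mulfK //.
exact: fact_Fp_neq0.
Qed.

Lemma pbinom_eval_m1 p (hp : prime p) (q : {poly 'F_p}) a j :
  (j < p)%N -> q.[a] = -1 -> (pbinom q j).[a] = (-1) ^+ j.
Proof.
move=> hj hq; rewrite /pbinom hornerZ horner_prod.
under eq_bigr => i _ do rewrite hornerD hornerN hornerC hq.
have -> : \prod_(i < j) (-1 - i%:R) = (-1) ^+ j * (j`!)%:R :> 'F_p.
  elim: j hj => [|j IH] hj; first by rewrite big_ord0 expr0 mul1r fact0.
  rewrite big_ord_recr /= IH ?(ltnW hj) // factS natrM exprS -[(j.+1)%:R]natr1.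
  ring.
rewrite mulrC mulfK //; exact: fact_Fp_neq0.
Qed.

Lemma size_pbinom (F : fieldType) (q : {poly F}) j :
  (size q <= 2)%N -> (size (pbinom q j) <= j.+1)%N.
Proof.
move=> hq; rewrite /pbinom (leq_trans (size_scale_leq _ _)) //.
elim: j => [|j IH]; first by rewrite big_ord0 size_poly1.
rewrite big_ord_recr /= (leq_trans (size_polyMleq _ _)) //.
have h2 : (size (q - (j%:R)%:P)%R <= 2)%N.
  by rewrite (leq_trans (size_polyD _ _)) // geq_max hq size_polyN (leq_trans (size_polyC_leq1 _)).
move: IH h2; case: (size _) => [|a]; case: (size _) => [|b] //=; lia.
Qed.


Lemma coef_linexp (F : fieldType) (t : F) M i :
  ((1 + t *: 'X) ^+ M)`_i = t ^+ i * ('C(M, i))%:R.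
Proof.
elim: M i => [|M IH] i.
  by rewrite expr0 coef1 bin0n; case: i => [|i] /=; rewrite ?expr0 ?mulr1 ?mulr0.
rewrite exprS mulrDl mul1r -scalerAl coefD coefZ coefXM.
case: i => [|i] /=; first by rewrite IH !bin0 !expr0 mulr0 addr0.
by rewrite !IH binS natrD exprS; ring.
Qed.

Lemma dexp (F : fieldType) (L : {poly F}) u n :
  L^`() = u%:P -> L * (L ^+ n)^`() = (u * n%:R) *: L ^+ n.
Proof.
move=> hL; rewrite deriv_exp hL; case: n => [|n]; first by rewrite !mulr0n mulr0 mulr0 scale0r.
by rewrite /= -mul_polyC polyCM -mulr_natl exprS polyC_natr; ring.
Qed.

Lemma ode (F : fieldType) (t : F) N M :
  let G := (1 + t *: 'X) ^+ M * (1 + 1 *: 'X) ^+ N in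
  G^`() * ((1 + 1 *: 'X) * (1 + t *: 'X)) =
  G * (N%:R *: (1 + t *: 'X) + (t * M%:R) *: (1 + 1 *: 'X)).
Proof.
move=> G.
have dC : forall u : F, (1 + u *: 'X)^`() = u%:P.
  by move=> u; rewrite derivD derivZ derivX -polyC1 derivC add0r alg_polyC.
have hA := @dexp _ _ _ N (dC 1); have hC := @dexp _ _ _ M (dC t).
rewrite /G derivM.
set A := 1 + 1 *: 'X in hA *; set C := 1 + t *: 'X in hC *.
rewrite mul1r in hA.
set AN := A ^+ N in hA *; set CM := C ^+ M in hC *.
rewrite -!mul_polyC in hA hC *.
have e1 : CM^`() * AN * (A * C) = (C * CM^`()) * AN * A by ring.
have e2 : CM * AN^`() * (A * C) = (A * AN^`()) * CM * C by ring.
rewrite mulrDl e1 e2 hA hC; ring.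
Qed.

Lemma rec_coef (F : fieldType) (t : F) N M m :
  let g := fun i => ((1 + t *: 'X) ^+ M * (1 + 1 *: 'X) ^+ N)`_i in
  (m.+2)%:R * g m.+2 + (1 + t) * (m.+1)%:R * g m.+1 + t * m%:R * g m =
  (N%:R + t * M%:R) * g m.+1 + (N%:R * t + t * M%:R) * g m.
Proof.
move=> g; have H := @ode _ t N M; simpl in H; have := congr1 (fun P : {poly F} => P`_m.+1) H.
rewrite /g; clear g H.
set G := (1 + t *: 'X) ^+ M * (1 + 1 *: 'X) ^+ N.
have eL : G^`() * ((1 + 1 *: 'X) * (1 + t *: 'X)) =
   G^`() + (1 + t) *: (G^`() * 'X) + t *: (G^`() * 'X * 'X).
  by rewrite scale1r -!mul_polyC polyCD; ring.
have eR : G * (N%:R *: (1 + t *: 'X) + (t * M%:R) *: (1 + 1 *: 'X)) =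
   (N%:R + t * M%:R) *: G + (N%:R * t + t * M%:R) *: (G * 'X).
  by rewrite scale1r -!mul_polyC !polyCD !polyCM; ring.
rewrite eL eR !coefD !coefZ !coefMX /= !coef_deriv.
case: m => [|m] /=.
  by move=> <-; rewrite !mulr0 mul0r mulr1 mulr1n mulr_natl.
by move=> <-; rewrite -!mulrA !mulr_natl.
Qed.

Set Implicit Arguments. Unset Strict Implicit.

Definition Bp (F : fieldType) (t c : F) (m : nat) : {poly F} :=
  \sum_(k < m.+1) t ^+ k *: (pbinom ('X - 1) (m - k) * pbinom (c *: 'X - 1) k).

Lemma size_lin (F : fieldType) (u : F) (v : F) : (size (u *: 'X - v%:P)%R <= 2)%N.
Proof.
rewrite (leq_trans (size_polyD _ _)) // geq_max size_polyN (leq_trans (size_polyC_leq1 _)) //.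
by rewrite (leq_trans (size_scale_leq _ _)) // size_polyX.
Qed.

Lemma size_Bp (F : fieldType) (t c : F) m : (size (Bp t c m) <= m.+1)%N.
Proof.
rewrite /Bp; apply: (big_ind (fun q : {poly F} => size q <= m.+1)%N).
- by rewrite size_poly0.
- by move=> x y hx hy; rewrite (leq_trans (size_polyD _ _)) // geq_max hx hy.
move=> k _; rewrite (leq_trans (size_scale_leq _ _)) //.
rewrite (leq_trans (size_polyMleq _ _)) //.
have h1 : (size (pbinom ('X - 1 : {poly F}) (m - k)) <= (m - k).+1)%N.
  by apply: size_pbinom; rewrite -[X in 'X - X]polyC1 -[X in X - _]scale1r size_lin.
have h2 : (size (pbinom (c *: 'X - 1) k) <= k.+1)%N.
  by apply: size_pbinom; rewrite -polyC1 size_lin.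
have hk := ltn_ord k.
move: h1 h2; case: (size _) => [|a]; case: (size _) => [|b] //=; lia.
Qed.

Lemma Bp_eval p (hp : prime p) (t c a : 'F_p) N M j :
  (j < p)%N -> N%:R = a - 1 -> M%:R = c * a - 1 ->
  (Bp t c j).[a] = ((1 + t *: 'X) ^+ M * (1 + 1 *: 'X) ^+ N)`_j.
Proof.
move=> hj hN hM; rewrite /Bp horner_sum coefM; apply: eq_bigr => k _.
have hk := ltn_ord k.
rewrite hornerZ hornerM (@pbinom_eval p hp _ a N) ?(@pbinom_eval p hp _ a M).
- by rewrite !coef_linexp expr1n mul1r; ring.
- lia.
- by rewrite !hornerE.
- lia.
- by rewrite !hornerE.
Qed.

Lemma natFp_neq0 p (hp : prime p) n : (0 < n < p)%N -> n%:R != 0 :> 'F_p.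
Proof.
move=> /andP [h0 h1]; rewrite -(dvdn_pcharf (pchar_Fp hp)).
by apply/negP => /(dvdn_leq h0); rewrite leqNgt h1.
Qed.

Lemma rec_poly p (hp : prime p) (t c : 'F_p) m : t * c = -1 -> (m.+2 < p)%N ->
  (m.+2)%:R *: Bp t c m.+2 =
  - ((1 + t) * (m.+2)%:R) *: Bp t c m.+1
  + ((t - 1) *: 'X - (t * (m.+2)%:R)%:P) * Bp t c m.
Proof.
move=> htc hm; apply/eqP; rewrite -subr_eq0; apply/eqP.
set E := _ - _.
apply: (@roots_geq_poly_eq0 _ E (enum 'F_p)); last first.
- rewrite -cardE card_Fp //.
  rewrite (leq_trans (size_polyD _ _)) // geq_max size_polyN.
  rewrite (leq_trans (size_scale_leq _ _)) ?(leq_trans (size_Bp _ _ _)) //=.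
  rewrite (leq_trans (size_polyD _ _)) // geq_max.
  rewrite (leq_trans (size_scale_leq _ _)) ?(leq_trans (size_Bp _ _ _)) //= .
  rewrite (leq_trans (size_polyMleq _ _)) //.
  have := size_lin (t - 1) (t * (m.+2)%:R); have := size_Bp t c m.
  move: (size (Bp t c m)) (size ((t - 1) *: 'X - (t * m.+2%:R)%:P)) => x y.
  case: x => [|x]; case: y => [|y] //=; lia.
- lia.
- exact: enum_uniq.
apply/allP => a _; rewrite /root /E.
have hN : (val (a - 1))%:R = a - 1 by rewrite natr_Zp.
have hM : (val (c * a - 1))%:R = c * a - 1 by rewrite natr_Zp.
have := @rec_coef _ t (val (a - 1)) (val (c * a - 1)) m.
rewrite hN hM.
rewrite !hornerE !(Bp_eval hp _ _ hN hM); try lia.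
set g0 := _`_m; set g1 := _`_m.+1; set g2 := _`_m.+2.
have e : t * (c * a - 1) = - a - t by rewrite mulrBr mulrA htc; ring.
rewrite e => h; simpl in h; rewrite -/g0 -/g1 -/g2 in h.
apply/eqP.
have h' : (m.+2)%:R * g2 + (1 + t) * (m.+1)%:R * g1 + t * m%:R * g0 -
   ((a - 1 + (- a - t)) * g1 + ((a - 1) * t + (- a - t)) * g0) = 0.
  by rewrite h subrr.
rewrite -h'; ring.
Qed.

Lemma pbinom0 (F : fieldType) (q : {poly F}) : pbinom q 0 = 1.
Proof. by rewrite /pbinom big_ord0 fact0 invr1 scale1r. Qed.

Lemma pbinom1 (F : fieldType) (q : {poly F}) : pbinom q 1 = q.
Proof. by rewrite /pbinom big_ord1 invr1 scale1r /= subr0. Qed.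

Lemma Bp0 (F : fieldType) (t c : F) : Bp t c 0 = 1.
Proof. by rewrite /Bp big_ord1 /= !pbinom0 mulr1 expr0 scale1r. Qed.

Lemma Bp1 (F : fieldType) (t c : F) : t * c = -1 -> Bp t c 1 = (- (1 + t))%:P.
Proof.
move=> htc; rewrite /Bp big_ord_recr big_ord1 /= !pbinom0 !pbinom1 mulr1 mul1r expr0 expr1 scale1r.
rewrite polyCN polyCD polyC1 scalerBr scalerA htc scaleN1r -mul_polyC mulr1; ring.
Qed.

Lemma deg_Bp p (hp : prime p) (t c : 'F_p) : t * c = -1 -> forall m, (m.+1 < p)%N ->
  (size (Bp t c m) <= (m./2).+1)%N /\ (size (Bp t c m.+1) <= (m.+1)./2.+1)%N.
Proof.
move=> htc; elim=> [|m IH] hm.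
  by rewrite Bp0 Bp1 // size_poly1 (leq_trans (size_polyC_leq1 _)).
have [_ h1] := IH (ltnW hm); have [h0 _] := IH (ltnW hm).
split => //.
have hmp : (m.+2 < p)%N by [].
have := rec_poly hp htc hmp => /(congr1 (fun q : {poly 'F_p} => size q)).
rewrite size_scale ?natFp_neq0 // => ->.
rewrite (leq_trans (size_polyD _ _)) // geq_max.
rewrite (leq_trans (size_scale_leq _ _)) ?(leq_trans h1) //=.
rewrite (leq_trans (size_polyMleq _ _)) //.
have := size_lin (t - 1) (t * (m.+2)%:R).
move: h0; move: (size (Bp t c m)) (size ((t - 1) *: 'X - (t * m.+2%:R)%:P)) => x y.
move: (m./2) => k; case: x => [|x]; case: y => [|y] //=; lia.
by rewrite uphalf_half; case: (odd m).
Qed.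


Lemma val_lt p (hp : prime p) (a : 'F_p) : (val a < p)%N.
Proof. by have := ltn_ord a; rewrite [X in (_ < X)%N -> _]Fp_cast. Qed.

Lemma val_pos p (hp : prime p) (a : 'F_p) : a != 0 -> (0 < val a)%N.
Proof.
move=> ha; rewrite lt0n; apply/negP => /eqP h.
by move: ha; rewrite -(natr_Zp a) h eqxx.
Qed.

Lemma val_opp p (hp : prime p) (a : 'F_p) : a != 0 -> (val a + val (- a) = p)%N.
Proof.
move=> ha.
have h : (p %| (val a + val (- a)))%N.
  by rewrite (dvdn_pcharf (pchar_Fp hp)) natrD !natr_Zp subrr.
have h1 := val_pos hp ha; have h2 := val_lt hp a; have h3 := val_lt hp (- a).
move/dvdnP: h => [k hk]; rewrite hk in h1 *.
case: k hk h1 => [|[|k]] hk h1 //=; try lia.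
Qed.

Lemma prod_comp (F : fieldType) (l : seq F) :
  (\prod_(a <- l) ('X - a%:P)) \Po (- 'X) =
  (-1) ^+ size l * \prod_(a <- map -%R l) ('X - a%:P).
Proof.
elim: l => [|x l IH]; first by rewrite !big_nil -polyC1 comp_polyC expr0 mulr1.
rewrite /= !big_cons comp_polyM IH comp_polyB comp_polyX comp_polyC polyCN exprS.
ring.
Qed.

Lemma geom_one p (hp : prime p) (t : 'F_p) : t != 1 -> \sum_(k < p) t ^+ k = 1.
Proof.
move=> ht; have := subrX1 t p.
have e : t ^+ p = t.
  by have := expf_card t; rewrite [X in t ^+ X = _ -> _](card_Fp hp).
rewrite e => /esym h.
apply: (mulfI (x := t - 1)); first by rewrite subr_eq0.
by rewrite h mulr1.
Qed.

Lemma natr_val p (a : 'F_p) : ((val a)%:R : 'F_p) = a.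
Proof. exact: natr_Zp. Qed.


Theorem lemma11 (p : nat) (hp : prime p) (hodd : odd p) (s : nat)
  (hs0 : (0 < s)%N) (hs : (s < p.-1)%N) :
  let b := b_poly p (1 : 'F_p) (s%:R) in
  b * (b \Po (- 'X)) = 1 - 'X^(p.-1)
  /\ size b = ((p.-1)./2).+1
  /\ exists (c : 'F_p) (rs : seq 'F_p),
       c != 0 /\ uniq rs /\ b = c *: \prod_(a <- rs) ('X - a%:P).
Proof.
move=> b.
have p0 := prime_gt0 hp.
have p2 : (2 < p)%N by lia.
set sF := (s%:R : 'F_p).
have sF0 : sF != 0 by apply: natFp_neq0 => //; lia.
set t := - 1 / sF.
have htc : t * sF = -1 by rewrite /t mulfVK.
have hs1 : 1 + sF != 0.
  by rewrite /sF addrC natr1; apply: natFp_neq0 => //; lia.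
have ht1 : t != 1.
  apply/eqP => e; move: htc; rewrite e mul1r => e2.
  by move: hs1; rewrite e2 subrr eqxx.
have hb : b = Bp t sF p.-1.
  rewrite /b /b_poly /Bp prednK //; apply: eq_bigr => k _; by rewrite scale1r.
have hdeg : (size b <= (p.-1)./2.+1)%N.
  have [_ h] := deg_Bp hp htc (m := p.-2) ltac:(lia).
  by rewrite hb; move: h; have -> : p.-2.+1 = p.-1 by lia.
have hodd1 : odd p.-1 = false.
  by move: hodd; rewrite -(prednK p0) /=; case: (odd _).
have b0 : b.[0] = 1.
  rewrite hb /Bp horner_sum -(geom_one hp ht1) prednK //.
  apply: eq_bigr => k _; have hk := ltn_ord k.
  rewrite hornerZ hornerM !(@pbinom_eval_m1 p hp); try (by rewrite !hornerE); try lia.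
  rewrite -exprD subnK; last lia.
  by rewrite -signr_odd hodd1 expr0 mulr1.
pose inS (a : 'F_p) := (a != 0) && (val a + val (sF * a)%R < p)%N.
have hroot : forall a, inS a -> b.[a] = 0.
  move=> a /andP [ha hlt].
  have hsa : sF * a != 0 by rewrite mulf_neq0.
  have va := val_pos hp ha; have vsa := val_pos hp hsa.
  have hN : ((val a).-1)%:R = a - 1.
    by have := natr_val a; rewrite -{1}(prednK va) -natr1 => e; apply: (addIr 1); rewrite e subrK.
  have hM : ((val (sF * a)).-1)%:R = sF * a - 1.
    by have := natr_val (sF * a); rewrite -{1}(prednK vsa) -natr1 => e; apply: (addIr 1); rewrite e subrK.
  rewrite hb (Bp_eval hp _ _ hN hM); last lia.
  rewrite coefM big1 // => k _; rewrite !coef_linexp expr1n mul1r.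
  case: (ssrnat.leqP k (val (sF * a)).-1) => hk.
    rewrite (@bin_small (val a).-1 (p.-1 - k)); last lia.
    by rewrite mulr0.
  by rewrite (@bin_small (val (sF * a)).-1 k) // mulr0 mul0r.
have hneg : forall a, a != 0 -> inS (- a) = ~~ inS a.
  move=> a ha; rewrite /inS oppr_eq0 ha !andTb mulrN.
  have hsa : sF * a != 0 by rewrite mulf_neq0.
  have e1 := val_opp hp ha; have e2 := val_opp hp hsa.
  have va := val_pos hp ha; have vsa := val_pos hp hsa.
  have l1 := val_lt hp a; have l2 := val_lt hp (sF * a).
  have hne : (val a + val (sF * a)%R != p)%N.
    apply/eqP => e.
    have : ((val a + val (sF * a)%R)%:R : 'F_p) = 0 by rewrite e pchar_Fp_0.
    rewrite natrD !natr_val -{1}[a]mul1r -mulrDl => /eqP.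
    by rewrite mulf_eq0 (negPf hs1) (negPf ha).
  rewrite -ltnNge; move/eqP: hne => hne.
  move: e1 e2 hne va vsa l1 l2; move: (val a) (val (- a)) (val (sF * a)%R) (val (- (sF * a))) => x y z w.
  move=> e1 e2 hne va vsa l1 l2; apply/idP/idP => H; lia.
set rs := [seq a <- enum 'F_p | inS a].
set nrs := map -%R rs.
have hm : forall x, (x \in nrs) = (- x \in rs).
  by move=> x; rewrite -{1}(opprK x) mem_map //; exact: oppr_inj.
have hin : forall x, (x \in rs) = inS x by move=> x; rewrite mem_filter mem_enum andbT.
have hperm : perm_eq (rs ++ nrs) [seq a <- enum 'F_p | a != 0].
  apply: uniq_perm.
  - rewrite cat_uniq filter_uniq ?enum_uniq //= (map_inj_uniq oppr_inj) filter_uniq ?enum_uniq // andbT.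
    apply/hasPn => x; rewrite hm !hin => hx.
    have hx0 : x != 0 by move: hx; rewrite -oppr_eq0; case/andP.
    by rewrite -(opprK x) hneg ?oppr_eq0 // negbK.
  - by rewrite filter_uniq ?enum_uniq.
  move=> x; rewrite mem_cat hm !hin mem_filter mem_enum andbT.
  have [->|hx] := eqVneq x 0; first by rewrite oppr0 /inS eqxx.
  by rewrite hneg // orbN.
have hQR : \prod_(a <- rs) ('X - a%:P) * \prod_(a <- nrs) ('X - a%:P) = 'X^(p.-1) - 1.
  rewrite -big_cat (perm_big _ hperm) big_filter.
  apply: (mulfI (x := 'X)); first by rewrite polyX_eq0.
  have := finField_genPoly 'F_p.
  rewrite (bigD1 0) //= subr0 card_Fp // => h.
  rewrite mulrBr mulr1 -exprS prednK // h big_enum_cond.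
  by congr (_ * _); apply: eq_bigl => i.
set Q := \prod_(a <- rs) ('X - a%:P).
have hsz : size rs = (p.-1)./2.
  have := congr1 (fun q : {poly 'F_p} => size q) hQR.
  rewrite /= -big_cat size_prod_XsubC size_Xn_sub_1; last lia.
  rewrite size_cat size_map => -[<-].
  by rewrite addnn doubleK.
have hb0 : b != 0 by apply/eqP => e; move: b0; rewrite e horner0 => /eqP; rewrite eq_sym oner_eq0.
have [q hq] : exists q, b = q * Q.
  apply: uniq_roots_prod_XsubC.
    by apply/allP => a; rewrite hin => /hroot ha; rewrite /root ha.
  by rewrite uniq_rootsE filter_uniq ?enum_uniq.
have hQ0 : Q != 0 by rewrite -size_poly_eq0 size_prod_XsubC.
have hq0 : q != 0 by apply/eqP => e; move: hb0; rewrite hq e mul0r eqxx.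
have hq1 : (size q <= 1)%N.
  move: hdeg; rewrite hq size_mul // size_prod_XsubC hsz.
  case: (size q) => [|n] //=; lia.
set c := q`_0.
have hbc : b = c *: Q by rewrite hq (size1_polyC hq1) mul_polyC.
have hc0 : c != 0.
  by apply/eqP => e; move: hq0; rewrite (size1_polyC hq1) -/c e eqxx.
have hsb : size b = (p.-1)./2.+1 by rewrite hbc size_scale // size_prod_XsubC hsz.
have hmain : b * (b \Po (- 'X)) = (c * c * (-1) ^+ size rs)%:P * ('X^(p.-1) - 1).
  rewrite -hQR {1}hbc {1}hbc comp_polyZ prod_comp -!mul_polyC !rmorphM rmorphXn rmorphN1.
  rewrite /Q /nrs; ring.
have hK : c * c * (-1) ^+ size rs = -1.
  have := congr1 (fun q : {poly 'F_p} => q.[0]) hmain.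
  rewrite /= hornerM horner_comp !hornerE b0 oppr0 b0 mul1r expr0n.
  have -> : (p.-1 == 0%N) = false by apply/negbTE; lia.
  by rewrite /= sub0r mulrN1 => e; rewrite -[LHS]opprK -e.
split; first by rewrite hmain hK rmorphN1 mulN1r opprB.
split; first exact: hsb.
exists c, rs; split => //; split => //.
by rewrite filter_uniq ?enum_uniq.
Qed.
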